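(* A modal formula is a theorem of $\mathrm{K4M}$ if and only if it is $d$-valid in every T$_D$ space that is crowded and openly irresolvable.
   Context: Modal formulas use propositional variables, Boolean connectives and $\Diamond,\Box$. A normal logic is a set of formulas containing all tautologies and all instances of $\Box(\varphi\to\psi)\to(\Box\varphi\to\Box\psi)$, closed under modus ponens and $\Box$-generalisation. $\mathrm{K4M}$ is the smallest normal logic containing all instances of $\Diamond\Diamond\varphi\to\Diamond\varphi$ and of the McKinsey scheme $\mathrm{M}:\ \Box\Diamond\varphi\to\Diamond\Box\varphi$. $d$-semantics: a model on a space $X$ is a valuation of variables by subsets of $X$; $\Diamond\varphi$ is interpreted as the set of limit points of the truth set of $\varphi$ ($x$ such that every $O-\{x\}$, $O$ an open neighbourhood of $x$, meets it), Boolean connectives as set operations, $\Box=\neg\Diamond\neg$. $\varphi$ is $d$-valid in $X$ if true at all points in all models on $X$. $X$ is T$_D$ if the set of limit points of each singleton is closed; crowded if it has no isolated points; irresolvable if it has no two disjoint non-empty dense subsets; openly irresolvable if every non-empty open subspace is irresolvable. *)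

(* Defs.v *)
From HB Require Import structures.
From mathcomp Require Import all_boot all_order.
From mathcomp Require Import all_classical all_reals topology.
Set Implicit Arguments. Unset Strict Implicit. Unset Printing Implicit Defensive.
Local Open Scope classical_set_scope.

Inductive form : Type :=
| Var : nat -> form
| Bot : form
| Imp : form -> form -> form
| Box : form -> form.

Definition Neg (p : form) : form := Imp p Bot.
Definition Top : form := Neg Bot.
Definition Or (p q : form) : form := Imp (Neg p) q.
Definition And (p q : form) : form := Neg (Imp p (Neg q)).
Definition Dia (p : form) : form := Neg (Box (Neg p)).

(** Propositional tautologies (substitution instances): formulas true under
    every Boolean valuation of their "atoms" (variables and boxed formulas). *)
Fixpoint beval (v : form -> bool) (p : form) : bool :=
  match p with
  | Var _ => v p
  | Bot => false
  | Imp a b => (~~ beval v a) || beval v b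
  | Box _ => v p
  end.

Definition tautology (p : form) : Prop := forall v : form -> bool, beval v p.

Inductive K4M : form -> Prop :=
| K4M_taut p : tautology p -> K4M p
| K4M_K p q : K4M (Imp (Box (Imp p q)) (Imp (Box p) (Box q)))
| K4M_4 p : K4M (Imp (Dia (Dia p)) (Dia p))
| K4M_M p : K4M (Imp (Box (Dia p)) (Dia (Box p)))
| K4M_MP p q : K4M (Imp p q) -> K4M p -> K4M q
| K4M_Nec p : K4M p -> K4M (Box p).

Fixpoint dsem (X : topologicalType) (v : nat -> set X) (p : form) : set X :=
  match p with
  | Var n => v n
  | Bot => set0
  | Imp a b => ~` dsem v a `|` dsem v b
  | Box a => ~` limit_point (~` dsem v a)
  end.

Definition d_valid (X : topologicalType) (p : form) : Prop :=
  forall (v : nat -> set X) (x : X), dsem v p x.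

Definition T_D (X : topologicalType) : Prop :=
  forall x : X, closed (limit_point [set x]).

Definition crowded (X : topologicalType) : Prop :=
  forall x : X, ~ isolated [set: X] x.

(** A is dense in the subspace U (subspace topology: opens are U `&` O). *)
Definition dense_in (X : topologicalType) (U A : set X) : Prop :=
  A `<=` U /\ forall O : set X, open O -> U `&` O !=set0 -> A `&` O !=set0.

Definition irresolvable_in (X : topologicalType) (U : set X) : Prop :=
  ~ exists A B : set X,
      [/\ dense_in U A, dense_in U B, A !=set0, B !=set0 & A `&` B = set0].

Definition irresolvable (X : topologicalType) : Prop :=
  irresolvable_in [set: X].

Definition openly_irresolvable (X : topologicalType) : Prop :=
  forall U : set X, open U -> U !=set0 -> irresolvable_in U.

(* Main.v *)
From HB Require Import structures.
Require Import Defs.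
From mathcomp Require Import all_boot all_order.
From mathcomp Require Import all_classical all_reals topology.
Set Implicit Arguments. Unset Strict Implicit. Unset Printing Implicit Defensive.
Local Open Scope classical_set_scope.
HB.instance Definition _ := gen_eqMixin form.
HB.instance Definition _ := gen_choiceMixin form.


Fixpoint imps (l : seq form) (c : form) : form :=
  if l is a :: l' then Imp a (imps l' c) else c.

Lemma beval_imps v l c : beval v (imps l c) = (all (beval v) l ==> beval v c).
Proof. by elim: l => [|a l IH] //=; rewrite IH; case: (beval v a). Qed.

Lemma K4M_imps l c : K4M (imps l c) -> (forall a, a \in l -> K4M a) -> K4M c.
Proof.
elim: l => [|a l IH] //= H Hl.
apply: IH; first by apply: K4M_MP H _; apply: Hl; rewrite inE eqxx.
by move=> b bl; apply: Hl; rewrite inE bl orbT.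
Qed.

Lemma tautK l c : tautology (imps l c) -> (forall a, a \in l -> K4M a) -> K4M c.
Proof. by move=> /K4M_taut; apply: K4M_imps. Qed.

Ltac solve_in := let x := fresh in let H := fresh in
  move=> x H; repeat (rewrite inE in H; case/orP: H => [/eqP -> // | H]);
  try (rewrite inE in H); move/eqP: H => ->.

Lemma K4M_mp1 a b : tautology (Imp a b) -> K4M a -> K4M b.
Proof. by move=> t Ha; apply: (@tautK [:: a]) => //; solve_in. Qed.
Lemma K4M_mp2 a b c : tautology (Imp a (Imp b c)) -> K4M a -> K4M b -> K4M c.
Proof. by move=> t Ha Hb; apply: (@tautK [:: a; b]) => //; solve_in. Qed.
Lemma K4M_mp3 a b c d : tautology (Imp a (Imp b (Imp c d))) -> K4M a -> K4M b -> K4M c -> K4M d.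
Proof. by move=> t Ha Hb Hc; apply: (@tautK [:: a; b; c]) => //; solve_in. Qed.
Lemma K4M_mp4 a b c d e : tautology (Imp a (Imp b (Imp c (Imp d e)))) -> K4M a -> K4M b -> K4M c -> K4M d -> K4M e.
Proof. by move=> t Ha Hb Hc Hd; apply: (@tautK [:: a; b; c; d]) => //; solve_in. Qed.

Ltac taut := let v := fresh "v" in unfold tautology; intro v; simpl;
  repeat match goal with
  | |- context [beval v ?x] => case: (beval v x)
  | |- context [v ?x] => case: (v x) end; done.

Lemma imp_trans a b c : K4M (Imp a b) -> K4M (Imp b c) -> K4M (Imp a c).
Proof. by apply: K4M_mp2; taut. Qed.

Lemma box_mono a b : K4M (Imp a b) -> K4M (Imp (Box a) (Box b)).
Proof. by move=> H; apply: K4M_MP (K4M_K a b) (K4M_Nec H). Qed.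

Lemma box_imps l c : K4M (Imp (Box (imps l c)) (imps (map Box l) (Box c))).
Proof.
elim: l => [|a l IH] /=; first by apply: K4M_taut; taut.
apply: K4M_mp2 (K4M_K a (imps l c)) IH; taut.
Qed.

Lemma box_and a b : K4M (Imp (Box a) (Imp (Box b) (Box (And a b)))).
Proof.
have H := box_imps [:: a; b] (And a b).
have H2 : K4M (imps [:: a; b] (And a b)) by apply: K4M_taut; taut.
exact: K4M_MP H (K4M_Nec H2).
Qed.

Lemma contra a b : K4M (Imp (Neg a) (Neg b)) -> K4M (Imp b a).
Proof. by apply: K4M_mp1; taut. Qed.

Lemma dia_mono a b : K4M (Imp a b) -> K4M (Imp (Dia a) (Dia b)).
Proof.
move=> H; have H1 : K4M (Imp (Neg b) (Neg a)) by apply: K4M_mp1 H; taut.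
by apply: K4M_mp1 (box_mono H1); taut.
Qed.

Lemma box_dia a b : K4M (Imp (Box a) (Imp (Dia b) (Dia (And a b)))).
Proof.
have H := box_imps [:: a; Neg (And a b)] (Neg b).
have H2 := K4M_Nec (K4M_taut (_ : tautology (imps [:: a; Neg (And a b)] (Neg b)))).
have H3 := K4M_MP H (H2 ltac:(taut)).
by apply: K4M_mp1 H3; taut.
Qed.

Lemma four_box a : K4M (Imp (Box a) (Box (Box a))).
Proof.
have H := K4M_4 (Neg a).
have H1 : K4M (Imp (Box a) (Box (Neg (Neg a)))) by apply: box_mono; apply: K4M_taut; taut.
have H2 : K4M (Imp (Box (Neg (Neg a))) (Box a)) by apply: box_mono; apply: K4M_taut; taut.
have H3 : K4M (Imp (Box (Neg (Neg (Box (Neg (Neg a)))))) (Box (Box a))).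
  apply: box_mono; apply: imp_trans H2; apply: K4M_taut; taut.
apply: K4M_mp3 H1 H H3; taut.
Qed.

Lemma dia_top : K4M (Dia Top).
Proof.
have H1 : K4M (Imp (Box Bot) (Box (Dia Bot))) by apply: box_mono; apply: K4M_taut; taut.
have H2 := K4M_M Bot.
have H3 : K4M (Imp (Box Bot) (Box (Neg (Box Bot)))) by apply: box_mono; apply: K4M_taut; taut.
have H4 : K4M (Imp (Box (Neg Top)) (Box Bot)) by apply: box_mono; apply: K4M_taut; taut.
apply: K4M_mp4 H1 H2 H3 H4; taut.
Qed.



Definition BO (t : form) := Or (Box t) (Box (Neg t)).

Fixpoint chi (l : seq form) : form :=
  if l is t :: l' then And (BO t) (chi l') else Top.

Lemma chi_box l : K4M (Imp (chi l) (Box (chi l))).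
Proof.
elim: l => [|t l IH] /=.
  have H : K4M (Box Top) by apply: K4M_Nec; apply: K4M_taut; taut.
  by apply: K4M_mp1 H; taut.
have H1 : K4M (Imp (Box t) (Box (BO t))).
  apply: imp_trans (four_box t) _; apply: box_mono; apply: K4M_taut; taut.
have H2 : K4M (Imp (Box (Neg t)) (Box (BO t))).
  apply: imp_trans (four_box (Neg t)) _; apply: box_mono; apply: K4M_taut; taut.
have H3 := box_and (BO t) (chi l).
apply: K4M_mp4 H1 H2 H3 IH; taut.
Qed.

Lemma chi_step t l : K4M (Imp (chi l) (Dia (chi (t :: l)))).
Proof.
set c := chi l; set X := chi (t :: l).
have H1 := chi_box l.
have H2 : K4M (Imp (Box c) (Imp (Dia (Box t)) (Dia X))).
  apply: imp_trans (box_dia c (Box t)) _.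
  have : K4M (Imp (Dia (And c (Box t))) (Dia X)) by apply: dia_mono; apply: K4M_taut; taut.
  by apply: K4M_mp1; taut.
have H3 : K4M (Imp (Box c) (Imp (Dia (Box (Neg t))) (Dia X))).
  apply: imp_trans (box_dia c (Box (Neg t))) _.
  have : K4M (Imp (Dia (And c (Box (Neg t)))) (Dia X)) by apply: dia_mono; apply: K4M_taut; taut.
  by apply: K4M_mp1; taut.
have H4 := K4M_M t.
apply: K4M_mp4 H1 H2 H3 H4; taut.
Qed.

Lemma dia_chi l : K4M (Dia (chi l)).
Proof.
elim: l => [|t l IH]; first exact: dia_top.
have H := dia_mono (chi_step t l).
have H2 := K4M_4 (chi (t :: l)).
apply: K4M_mp3 IH H H2; taut.
Qed.



Definition der (S : set form) (p : form) :=
  exists l : seq form, (forall a, a \in l -> S a) /\ K4M (imps l p).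
Definition cons (S : set form) := ~ der S Bot.
Definition mcs (S : set form) := cons S /\ forall p, S p \/ S (Neg p).

Lemma der_K S p : K4M p -> der S p.
Proof. by move=> H; exists [::]. Qed.

Lemma der_in S p : S p -> der S p.
Proof.
move=> Sp; exists [:: p]; split; last by apply: K4M_taut; taut.
by move=> a; rewrite inE => /eqP ->.
Qed.

Lemma der_sub S T p : S `<=` T -> der S p -> der T p.
Proof. by move=> ST [l [Hl Hk]]; exists l; split => // a /Hl /ST. Qed.

Lemma der_mp S a b : der S (Imp a b) -> der S a -> der S b.
Proof.
move=> [l1 [H1 K1]] [l2 [H2 K2]]; exists (l1 ++ l2); split.
  by move=> x; rewrite mem_cat => /orP [/H1|/H2].
apply: K4M_mp2 K1 K2 => v /=; rewrite !beval_imps all_cat /=.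
by case: (all _ l1); case: (all _ l2); case: (beval v a); case: (beval v b).
Qed.

Lemma der_taut1 S a b : tautology (Imp a b) -> der S a -> der S b.
Proof. by move=> t; apply: der_mp; apply: der_K; apply: K4M_taut. Qed.

Lemma der_ded S a b : der (S `|` [set a]) b -> der S (Imp a b).
Proof.
move=> [l [Hl Hk]]; exists [seq x <- l | x != a]; split.
  move=> x; rewrite mem_filter => /andP [xa /Hl [//|/= xa']].
  by rewrite xa' eqxx in xa.
apply: K4M_mp1 Hk => v /=; rewrite !beval_imps /=.
case E: (all (beval v) l) => /=; first by case: (all _ _); case: (beval v a); case: (beval v b).
case E2: (all (beval v) [seq x <- l | x != a]) => //=.
case Ea: (beval v a) => //=.
move: E => /negbT/negP; case; apply/allP => x xl.
case: (eqVneq x a) => [->//|xa].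
by move/allP: E2; apply; rewrite mem_filter xa.
Qed.

Lemma lindenbaum S : cons S -> exists M, S `<=` M /\ mcs M.
Proof.
move=> cS.
have Hz : forall F : set (set form), F `<=` [set A | cons (S `|` A)] -> total_on F subset ->
    [set A | cons (S `|` A)] (\bigcup_(X in F) X).
  move=> F FP Ftot [l [Hl Hk]].
  suff [B [HB lB]] : exists B, (B = set0 \/ F B) /\ (forall a, a \in l -> (S `|` B) a).
    case: HB => [BE|FB].
      by apply: cS; exists l; split => // a /lB; rewrite BE setU0.
    by apply: (FP _ FB); exists l.
  elim: l Hl {Hk} => [|a l IH] Hl.
    by exists set0; split; [left|].
  have [B [HB lB]] : exists B, (B = set0 \/ F B) /\ (forall a, a \in l -> (S `|` B) a).
    by apply: IH => x xl; apply: Hl; rewrite inE xl orbT.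
  have := Hl a; rewrite inE eqxx => /(_ isT) [Sa|[C FC Ca]].
    exists B; split => // x; rewrite inE => /orP [/eqP ->|/lB //]; by left.
  case: HB => [BE|FB].
    exists C; split; first by right.
    move=> x; rewrite inE => /orP [/eqP ->|/lB]; first by right.
    by rewrite BE setU0; left.
  case: (Ftot _ _ FB FC) => [BC|CB].
    exists C; split; first by right.
    move=> x; rewrite inE => /orP [/eqP ->|/lB [?|/BC ?]]; [by right|by left|by right].
  exists B; split; first by right.
  move=> x; rewrite inE => /orP [/eqP ->|/lB //]; by right; apply: CB.
have [A [PA Amax]] := Zorn_bigcup Hz.
exists (S `|` A); split; first by move=> x; left.
split => // p.
apply: contrapT => /not_orP [np nnp].
have key : forall q, ~ (S `|` A) q -> der (S `|` A) (Neg q).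
  move=> q nq; apply: der_ded.
  have : ~ cons (S `|` (A `|` [set q])).
    apply: Amax; rewrite properEneq; split; last by move=> x; left.
    apply/eqP => AE; apply: nq; right; rewrite AE; by right.
  by rewrite setUA => /contrapT.
by apply: PA; apply: der_mp (key _ nnp) (key _ np).
Qed.

Section MCS.
Variable M : set form.
Hypothesis HM : mcs M.

Lemma mcs_der p : der M p -> M p.
Proof.
move=> H; case: (HM.2 p) => // Hn; exfalso; apply: HM.1.
exact: der_mp (der_in Hn) H.
Qed.

Lemma mcs_K p : K4M p -> M p.
Proof. by move=> /der_K H; apply: mcs_der. Qed.

Lemma mcs_bot : ~ M Bot.
Proof. by move=> /der_in; apply: HM.1. Qed.

Lemma mcs_imp a b : M (Imp a b) <-> (M a -> M b).
Proof.
split; first by move=> H Ha; apply: mcs_der; apply: der_mp (der_in H) (der_in Ha).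
move=> H; case: (HM.2 a) => Ha.
  by apply: mcs_der; apply: der_taut1 (der_in (H Ha)); taut.
by apply: mcs_der; apply: der_taut1 (der_in Ha); taut.
Qed.

Lemma mcs_neg a : M (Neg a) <-> ~ M a.
Proof.
rewrite /Neg mcs_imp; split => [H /H|H /H //]; exact: mcs_bot.
Qed.

End MCS.

Definition Rel (M N : set form) := forall p, M (Box p) -> N p.

Lemma box_der M a : mcs M -> der [set p | M (Box p)] a -> M (Box a).
Proof.
move=> HM [l [Hl Hk]]; apply: (mcs_der HM); exists (map Box l); split.
  by move=> x /mapP [y /Hl yl ->].
exact: K4M_MP (box_imps l a) (K4M_Nec Hk).
Qed.

Lemma existence M a : mcs M -> ~ M (Box a) -> exists N, [/\ mcs N, Rel M N & ~ N a].
Proof.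
move=> HM nB.
have [|N [SN HN]] := @lindenbaum ([set p | M (Box p)] `|` [set Neg a]).
  move=> /der_ded /(der_taut1 (b := a)) H; apply: nB; apply: box_der => //.
  by apply: H; taut.
exists N; split => //; first by move=> p Mp; apply: SN; left.
by apply/(mcs_neg HN); apply: SN; right.
Qed.

Lemma Rel_trans M N P : mcs M -> Rel M N -> Rel N P -> Rel M P.
Proof.
move=> HM MN NP p Mp; apply: NP; apply: MN.
by apply: (proj1 (mcs_imp HM _ _) (mcs_K HM (four_box p))).
Qed.

Lemma der_BO B p : der (B `|` [set q | exists t, q = BO t]) p ->
  exists ls, der B (Imp (chi ls) p).
Proof.
move=> [l [Hl Hk]]; elim: l p Hl Hk => [|a l IH] p Hl Hk /=.
  by exists [::]; apply: der_K; apply: K4M_mp1 Hk; taut.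
have Hk' : K4M (imps l (Imp a p)).
  apply: K4M_mp1 Hk => v /=; rewrite !beval_imps.
  by rewrite /=; case: (all _ l); case: (beval v a); case: (beval v p).
have [ls Hls] := IH _ (fun x xl => Hl x (ltac:(by rewrite inE xl orbT))) Hk'.
have := Hl a; rewrite inE eqxx => /(_ isT) [Ba|[t aE]].
  by exists ls; apply: der_mp (der_taut1 _ Hls) (der_in Ba); taut.
by rewrite aE in Hls; exists (t :: ls); apply: der_taut1 Hls; taut.
Qed.

Lemma endpoint M : mcs M -> exists U, [/\ mcs U, Rel M U &
  forall N, mcs N -> Rel U N -> N = U].
Proof.
move=> HM.
have [|E [SE HE]] := @lindenbaum ([set p | M (Box p)] `|` [set q | exists t, q = BO t]).
  move=> /der_BO [ls Hls].
  have := mcs_K HM (dia_chi ls) => /(mcs_neg HM); apply.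
  exact: box_der HM Hls.
have ME : Rel M E by move=> p Mp; apply: SE; left.
have EBO : forall t, E (Box t) \/ E (Box (Neg t)).
  move=> t; have : E (BO t) by apply: SE; right; exists t.
  rewrite /BO /Or (mcs_imp HE) (mcs_neg HE).
  by case: (pselect (E (Box t))) => [?|?/(_ _)]; [left|right; auto].
have uniq : forall N N', mcs N -> mcs N' -> Rel E N -> Rel E N' -> N = N'.
  move=> N N' HN HN' EN EN'; apply/seteqP; split => p.
    case: (EBO p) => [/EN' //|/EN /(mcs_neg HN) //].
  case: (EBO p) => [/EN //|/EN' /(mcs_neg HN') //].
have [U [HU EU _]] : exists U, [/\ mcs U, Rel E U & ~ U (Neg Top)].
  apply: existence => //.
  by apply/(mcs_neg HE); apply: (mcs_K HE dia_top).
exists U; split => //; first exact: Rel_trans HM ME EU.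
move=> N HN UN; apply: uniq => //; exact: Rel_trans HE EU UN.
Qed.


Section Topo.
Variable X : topologicalType.

Lemma nbhs_open (x : X) U : nbhs x U -> exists O, [/\ open O, O x & O `<=` U].
Proof. by rewrite nbhsE => -[B [oB Bx] BU]; exists B. Qed.

Lemma open_nbhs' (O : set X) x : open O -> O x -> nbhs x O.
Proof. by move=> oO Ox; apply: open_nbhs_nbhs. Qed.

Lemma lp_sub (A B : set X) : A `<=` B -> limit_point A `<=` limit_point B.
Proof. by move=> AB x H U nU; have [y [? ? ?]] := H U nU; exists y; split => //; apply: AB. Qed.

Lemma lp_U (A B : set X) x : limit_point (A `|` B) x -> limit_point A x \/ limit_point B x.
Proof.
move=> H; apply: contrapT => /not_orP [].
rewrite !not_limit_pointE => -[U nU HU] [V nV HV].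
have [y [yx [Ay|By] [Uy Vy]]] := H _ (filterI nU nV).
  by move/eqP: yx; apply; apply: HU.
by move/eqP: yx; apply; apply: HV.
Qed.

Lemma lp0 (x : X) : ~ limit_point set0 x.
Proof. by move=> /(_ setT filterT) [y [_ []]]. Qed.

Lemma TD_nbhd : T_D X -> forall x : X, exists W : set X, [/\ open W, W x &
  forall z, W z -> z != x -> exists N, nbhs z N /\ ~ N x].
Proof.
move=> TD x; exists (~` limit_point [set x]); split.
- exact: closed_openC.
- by move=> /(_ setT filterT) [y [/eqP yx /= yx' _]].
- move=> z /=; rewrite not_limit_pointE => -[N nN HN] zx; exists N; split => // Nx.
  by move/eqP: zx; apply; apply/esym; apply: HN.
Qed.

Lemma lplp : T_D X -> forall (A : set X) x, limit_point (limit_point A) x -> limit_point A x.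
Proof.
move=> TD A x H U nU.
have [O [oO Ox OU]] := nbhs_open nU.
have [W [oW Wx HW]] := TD_nbhd TD x.
have [z [zx lz [Oz Wz]]] := H _ (open_nbhs' (openI oO oW) (conj Ox Wx)).
have [N [nN Nx]] := HW z Wz zx.
have [y [yz Ay [[Oy Wy] Ny]]] := lz _ (filterI (open_nbhs' (openI oO oW) (conj Oz Wz)) nN).
exists y; split => //; last exact: OU.
by apply/eqP => yx; apply: Nx; rewrite -yx.
Qed.

Lemma dense_of (O B : set X) : open O -> (forall z, O z -> limit_point B z) ->
  dense_in O (B `&` O).
Proof.
move=> oO H; split; first by move=> ? [].
move=> G oG [z [Oz Gz]].
have [y [_ By [Oy Gy]]] := H z Oz _ (open_nbhs' (openI oO oG) (conj Oz Gz)).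
by exists y.
Qed.

Lemma msound : T_D X -> crowded X -> openly_irresolvable X ->
  forall (A : set X) x, ~ limit_point (~` limit_point A) x ->
  limit_point (~` limit_point (~` A)) x.
Proof.
move=> TD cr oi A x; rewrite not_limit_pointE => -[U nU HU] V nV.
have [W [oW Wx HW]] := TD_nbhd TD x.
have [O [oO Ox OUV]] := nbhs_open (filterI nU nV).
pose O1 := O `&` W.
have oO1 : open O1 by apply: openI.
pose O' := O1 `&` ~` [set x].
have oO' : open O'.
  rewrite openE => z [[Oz Wz] zx].
  have [N [nN Nx]] := HW z Wz (introN eqP zx).
  apply: filterS (filterI (open_nbhs' oO1 (conj Oz Wz)) nN).
  by move=> y [O1y Ny]; split => // yx; apply: Nx; rewrite -yx.
have neO' : O' !=set0.
  apply: contrapT => nO; apply: (cr x); split; first exact: mem_set.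
  exists O1; first exact: open_nbhs' oO1 (conj Ox Wx).
  apply/seteqP; split => [y [O1y _]|y ->] //=.
  by apply: contrapT => yx; apply: nO; exists y.
apply: contrapT => nH.
have H1 : forall z, O' z -> limit_point (~` A) z.
  move=> z O'z; apply: contrapT => nz; apply: nH; exists z; split => //.
    by apply/eqP; case: O'z.
  by case: O'z => -[/OUV []].
have H2 : forall z, O' z -> limit_point A z.
  move=> z [[Oz _] zx]; apply: contrapT => nz; apply: zx.
  by apply: HU; split => //; case: (OUV _ Oz).
apply: (oi O' oO' neO'); exists (A `&` O'), (~` A `&` O'); split.
- exact: dense_of.
- exact: dense_of.
- have [z O'z] := neO'; have := (dense_of oO' H2).2 _ openT.
  by case; [exists z|move=> y [? _]; exists y].
- have [z O'z] := neO'; have := (dense_of oO' H1).2 _ openT.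
  by case; [exists z|move=> y [? _]; exists y].
- by apply/seteqP; split => y // [[Ay _] [nAy _]].
Qed.

End Topo.

Lemma dsem_imp (X : topologicalType) (v : nat -> set X) a b x :
  dsem v (Imp a b) x <-> (dsem v a x -> dsem v b x).
Proof.
split => [[na|] //|H] /=.
by case: (pselect (dsem v a x)) => [/H|]; [right|left].
Qed.

Lemma dsem_diaE (X : topologicalType) (v : nat -> set X) a :
  dsem v (Dia a) = limit_point (dsem v a).
Proof. by rewrite /Dia /Neg /= !setU0 !setCK. Qed.

Theorem soundness p : K4M p ->
  forall X : topologicalType, T_D X -> crowded X -> openly_irresolvable X -> d_valid X p.
Proof.
move=> H X TD cr oi; elim: H => {p}.
- move=> p tp v x.
  pose b q := `[< dsem v q x >].
  have E : forall q, beval b q = b q.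
    elim => [n|| a IHa c IHc| a IHa] //=.
      by rewrite /b asboolF.
    rewrite IHa IHc /b; apply/idP/asboolP.
      by move=> /orP [/asboolPn na|/asboolP hc]; [left|right].
    by case => [na|hc]; apply/orP; [left; apply/asboolPn|right; apply/asboolP].
  by have := tp b; rewrite E => /asboolP.
- move=> a c v x; rewrite !dsem_imp => H1 H2 H3; apply: H1.
  have sub : ~` dsem v c `<=` ~` dsem v (Imp a c) `|` ~` dsem v a.
    move=> z nc; case: (pselect (dsem v a z)) => az; [left|right] => //.
    by move=> [].
  by case: (lp_U (lp_sub sub H3)) => // /H2.
- by move=> a v x; rewrite dsem_imp !dsem_diaE; apply: lplp.
- move=> a v x; rewrite dsem_imp => H.
  have : ~ limit_point (~` dsem v (Dia a)) x := H.
  rewrite dsem_diaE => H'; rewrite dsem_diaE.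
  exact: msound H'.
- by move=> a c _ Hac _ Ha v x; apply/(dsem_imp _ _ _ x).1: (Ha v x).
- move=> a _ Ha v x /=.
  have -> : ~` dsem v a = set0 by apply/seteqP; split => z // /(_ (Ha v z)).
  exact: lp0.
Qed.


Lemma uf_exists : exists G : set (set nat),
  [/\ Filter G, ~ G set0, (forall A, G A \/ G (~` A)) & (forall k, G (~` [set k]))].
Proof.
have [G [UG sub]] := ultraFilterLemma (@eventually_filter).
exists G; split.
- exact: filter_filter.
- exact: filter_not_empty.
- by move=> A; apply: in_ultra_setVsetC.
- move=> k; apply: sub; exists k.+1 => // m /= km mk.
  by rewrite mk ltnn in km.
Qed.

Definition UF : set (set nat) := proj1_sig (cid uf_exists).
Lemma UF_prop : [/\ Filter UF, ~ UF set0, (forall A, UF A \/ UF (~` A)) & (forall k, UF (~` [set k]))].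
Proof. exact: proj2_sig (cid uf_exists). Qed.

Lemma UF_filter : Filter UF. Proof. by case: UF_prop. Qed.
Lemma UF_ne A : UF A -> exists m, A m.
Proof.
case: UF_prop => _ H0 _ _ UA; apply: contrapT => nA; apply: H0.
by have <- : A = set0 by apply/seteqP; split => // m Am; apply: nA; exists m.
Qed.
Lemma UF_ultra A : UF A \/ UF (~` A). Proof. by case: UF_prop => _ _ H _. Qed.
Lemma UF_cof k : UF (~` [set k]). Proof. by case: UF_prop => _ _ _ H. Qed.
Lemma UF_T : UF setT. Proof. exact: (@filterT _ _ UF_filter). Qed.
Lemma UF_I A B : UF A -> UF B -> UF (A `&` B). Proof. exact: (@filterI _ _ UF_filter). Qed.
Lemma UF_S (A B : set nat) : A `<=` B -> UF A -> UF B. Proof. exact: (@filterS _ _ UF_filter). Qed.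

Definition mcsT := {S : set form | mcs S}.
Definition RR (u w : mcsT) := Rel (proj1_sig u) (proj1_sig w).

Lemma RR_trans u w z : RR u w -> RR w z -> RR u z.
Proof. by apply: Rel_trans; exact: proj2_sig u. Qed.

Definition Pt := (mcsT * nat)%type.
HB.instance Definition _ := gen_eqMixin Pt.
HB.instance Definition _ := gen_choiceMixin Pt.

Definition fib (O : set Pt) (a : mcsT) : set nat := [set m | O (a, m)].
Definition op (O : set Pt) := forall w n a, O (w, n) -> RR w a -> UF (fib O a).

Lemma opT : op setT.
Proof. by move=> w n a _ _; apply: UF_S UF_T. Qed.
Lemma opI : setI_closed op.
Proof.
move=> O1 O2 H1 H2 w n a [O1x O2x] wa.
by apply: UF_S (UF_I (H1 _ _ _ O1x wa) (H2 _ _ _ O2x wa)) => m [].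
Qed.
Lemma op_bigU (I : Type) (f : I -> set Pt) : (forall i, op (f i)) -> op (\bigcup_i f i).
Proof.
move=> H w n a [i _ fi] wa; apply: UF_S (H i _ _ _ fi wa) => m fm.
by exists i.
Qed.

HB.instance Definition _ := isOpenTopological.Build Pt opT opI op_bigU.


Lemma openPt (O : set Pt) : open O = op O.
Proof. by []. Qed.

Lemma keylemma (A : set mcsT) (w : mcsT) n :
  limit_point [set p : Pt | A p.1] (w, n) <-> exists a, A a /\ RR w a.
Proof.
split.
  move=> H; apply: contrapT => nE.
  pose O := [set p : Pt | p = (w, n) \/ RR w p.1].
  have oO : open O.
    rewrite openPt => w' n' a [[-> _]|ww'] w'a; apply: UF_S UF_T => m _; right => //=.
    exact: RR_trans ww' w'a.
  have [y [yx Ay [yE|wy]]] := H O (open_nbhs' oO (or_introl erefl)).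
    by rewrite yE eqxx in yx.
  by apply: nE; exists y.1.
move=> [a [Aa wa]] U nU.
have [O [oO Ox OU]] := nbhs_open nU.
move: oO; rewrite openPt => /(_ _ _ a Ox wa) Fa.
have [m [Om mn]] := UF_ne (UF_I Fa (UF_cof n)).
exists (a, m); split => //; last exact: OU.
by apply/eqP => -[_ mnE]; apply: mn.
Qed.

Definition valc (n : nat) : set Pt := [set p | proj1_sig p.1 (Var n)].

Lemma truth q : forall p : Pt, dsem valc q p <-> proj1_sig p.1 q.
Proof.
elim: q => [n|| a IHa c IHc| a IHa] p //.
- by split => //= /(mcs_bot (proj2_sig p.1)).
- rewrite (dsem_imp valc a c p) (mcs_imp (proj2_sig p.1)) IHa IHc; done.
- change (~ limit_point (~` dsem valc a) p <-> proj1_sig p.1 (Box a)).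
  have -> : ~` dsem valc a = [set p : Pt | ~ proj1_sig p.1 a].
    by apply/seteqP; split => y /=; rewrite IHa.
  case: p => w n /=; rewrite (keylemma (fun u => ~ proj1_sig u a)); split.
    move=> H; apply: contrapT => nB.
    have [N [HN wN Na]] := existence (proj2_sig w) nB.
    by apply: H; exists (exist _ N HN).
  by move=> Hb [u [nu wu]]; apply: nu; apply: wu.
Qed.

Lemma Pt_TD : T_D Pt.
Proof.
move=> x; have -> : limit_point [set x] = set0; last exact: closed0.
apply/seteqP; split => // -[w' n'] H.
pose O := [set p : Pt | (p = (w', n') \/ RR w' p.1) /\ p <> x].
have oO : open O.
  rewrite openPt => w n a [Hp _] wa.
  have w'a : RR w' a by case: Hp => [[wE _]|Hw]; [rewrite -wE|apply: RR_trans Hw wa].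
  apply: UF_S (UF_cof x.2) => m mx; split; first by right.
  by move=> mE; apply: mx; rewrite -mE.
have Oy : O (w', n').
  split; first by left.
  by move=> yx; have [z [/eqP zy /= zx _]] := H setT filterT; apply: zy; rewrite zx.
have [z [/eqP zy /= zx [_ Oz]]] := H O (open_nbhs' oO Oy).
exact: Oz zx.
Qed.

Lemma endpointT (w : mcsT) : exists e : mcsT, RR w e /\ forall a, RR e a -> a = e.
Proof.
have [U [HU wU Uend]] := endpoint (proj2_sig w).
exists (exist _ U HU); split => // -[a Ha] ea.
by apply: eq_exist; apply: Uend.
Qed.

Lemma Pt_crowded : crowded Pt.
Proof.
move=> [w n] [_ [V nV VE]].
have [e [we _]] := endpointT w.
have : limit_point [set p : Pt | setT p.1] (w, n) by rewrite keylemma; exists e.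
move=> /(_ V nV) [y [/eqP yx _ Vy]].
have : (V `&` setT) y by [].
by rewrite VE.
Qed.

Lemma Pt_oi : openly_irresolvable Pt.
Proof.
move=> O oO [[w n] Ox] [A [B [[AO dA] [BO dB] _ _ AB]]].
have [e [we eend]] := endpointT w.
have FO : UF (fib O e) by move: oO; rewrite openPt => /(_ _ _ e Ox we).
have dense_fib : forall D : set Pt, (forall G, open G -> O `&` G !=set0 -> D `&` G !=set0) ->
    UF (fib D e).
  move=> D dD; case: (UF_ultra (fib D e)) => // nD.
  pose O' := [set p : Pt | p.1 = e /\ (fib O e `&` ~` fib D e) p.2].
  have oO' : open O'.
    rewrite openPt => w' n' a [/= -> _] ea; rewrite (eend a ea).
    by apply: UF_S (UF_I FO nD) => m Hm.
  have [m Hm] := UF_ne (UF_I FO nD).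
  have [|p [Dp [pe [_ nDp]]]] := dD O' oO'.
    by exists (e, m); split; [case: Hm|].
  by case: p Dp pe nDp => a k /= Dp ae; rewrite ae in Dp => /(_ Dp).
have [m [Am Bm]] := UF_ne (UF_I (dense_fib A dA) (dense_fib B dB)).
have : (A `&` B) (e, m) by [].
by rewrite AB.
Qed.

Theorem theorem12 (p : form) :
  K4M p <->
  (forall X : topologicalType,
      T_D X -> crowded X -> openly_irresolvable X -> d_valid X p).
Proof.
split; first by move=> H X; apply: soundness.
move=> H; apply: contrapT => nK.
have [|M [SM HM]] := @lindenbaum [set Neg p].
  move=> Hd; apply: nK.
  have : der set0 (Neg (Neg p)) by apply: der_ded; apply: der_sub Hd => q ->; right.
  move=> Hd2; have : der set0 p by apply: der_taut1 Hd2; taut.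
  move=> [[|a l] [Hl Hk]] //.
  by have := Hl a (mem_head _ _).
have := H Pt Pt_TD Pt_crowded Pt_oi valc (exist _ M HM, 0%N).
rewrite truth /= => Mp.
by have := SM _ erefl => /(mcs_neg HM).
Qed.
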